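(* Let $a,b\in\mathbb{R}$ with $a<b$, let $n\in\mathbb{N}$ with $n\ge2$, and let $q\ge1$. Then $$\left|A(a^n,b^n)-L_n^n(a,b)\right|\le \frac{n(n-1)(b-a)^2}{4}\left(\frac{2}{(q+1)(q+2)}\right)^{\frac1q}\left(\max\{|a|^{(n-2)q},|b|^{(n-2)q}\}\right)^{\frac1q}.$$
   Context: $A(x,y)=\frac{x+y}{2}$ (arithmetic mean). For $a\ne b$ and $n\in\mathbb{Z}\setminus\{-1,0\}$, $L_n(a,b)=\left[\frac{b^{n+1}-a^{n+1}}{(n+1)(b-a)}\right]^{1/n}$ (generalized logarithmic mean), so $L_n^n(a,b)=\frac{b^{n+1}-a^{n+1}}{(n+1)(b-a)}$. *)

(* Defs.v *)
From Stdlib Require Import Reals Lra.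
Open Scope R_scope.

(* Real power x^y for x >= 0, with the usual conventions
   0^y = 0 for y <> 0 (y > 0 in our use) and 0^0 = 1.
   (Stdlib's Rpower gives Rpower 0 y = 1, which is wrong for y > 0.) *)
Definition rpow (x y : R) : R :=
  if Rlt_dec 0 x then Rpower x y
  else if Req_EM_T y 0 then 1 else 0.

Definition AM (x y : R) : R := (x + y) / 2.

Definition Ln_pow (n : nat) (a b : R) : R :=
  (b ^ (n + 1) - a ^ (n + 1)) / (INR (n + 1) * (b - a)).

(* Main.v *)
Require Import Defs.
From Stdlib Require Import Reals Lra Lia.
Open Scope R_scope.

Definition T (a b : R) (n : nat) := sum_f_R0 (fun k => a^k * b^(n-k)) n.

Lemma T_S a b n : T a b (S n) = b * T a b n + a^(S n).
Proof.
  unfold T. rewrite tech5, Nat.sub_diag, pow_O, Rmult_1_r.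
  f_equal. rewrite scal_sum. apply sum_eq; intros i Hi.
  rewrite Nat.sub_succ_l by exact Hi. simpl. ring.
Qed.

Lemma T_geom a b n : (b - a) * T a b n = b^(S n) - a^(S n).
Proof.
  induction n.
  - unfold T. simpl. ring.
  - rewrite T_S. replace ((b - a) * (b * T a b n + a ^ S n)) with (b * ((b-a) * T a b n) + (b-a)*a^S n) by ring.
    rewrite IHn. simpl. ring.
Qed.

Lemma T_sym a b n : a <> b -> T b a n = T a b n.
Proof.
  intro H. apply (Rmult_eq_reg_l (b - a)); [|lra].
  rewrite T_geom. replace (b - a) with (-(a-b)) by ring.
  rewrite Ropp_mult_distr_l_reverse, T_geom. ring.
Qed.

Lemma T_bound a b n : Rabs (T a b n) <= INR (S n) * (Rmax (Rabs a) (Rabs b))^n.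
Proof.
  unfold T. eapply Rle_trans; [apply sum_f_R0_triangle|].
  set (K := Rmax (Rabs a) (Rabs b)).
  eapply Rle_trans with (sum_f_R0 (fun _ => K^n) n).
  - apply sum_Rle; intros i Hi. rewrite Rabs_mult, <- !RPow_abs.
    replace (K^n) with (K^i * K^(n-i)) by (rewrite <- pow_add; f_equal; lia).
    apply Rmult_le_compat; try apply pow_le; try apply Rabs_pos;
      apply pow_incr; split; try apply Rabs_pos; unfold K;
      [apply Rmax_l | apply Rmax_r].
  - rewrite sum_cte. lra.
Qed.

Lemma diff_bound a b k : a < b ->
  Rabs (a^k - b^k) * Rmax (Rabs a) (Rabs b) <= (b - a) * INR k * (Rmax (Rabs a) (Rabs b))^k.
Proof.
  intro H. set (K := Rmax (Rabs a) (Rabs b)).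
  assert (HK : 0 <= K) by (unfold K; eapply Rle_trans; [apply Rabs_pos|apply Rmax_l]).
  destruct k.
  - simpl. rewrite Rminus_diag, Rabs_R0. lra.
  - replace (a^S k - b^S k) with (-((b-a) * T a b k)) by (rewrite T_geom; ring).
    rewrite Rabs_Ropp, Rabs_mult, Rabs_pos_eq by lra.
    pose proof (T_bound a b k) as HT. fold K in HT.
    simpl pow. 
    replace ((b - a) * INR (S k) * (K * K ^ k)) with ((b-a) * (INR (S k) * K^k) * K) by ring.
    apply Rmult_le_compat_r; [exact HK|]. apply Rmult_le_compat_l; lra.
Qed.

Lemma sum_id n : sum_f_R0 (fun k => INR k) n = INR n * (INR n + 1) / 2.
Proof. induction n. simpl; lra. rewrite tech5, IHn, S_INR. field. Qed.
Lemma sum_sq n : sum_f_R0 (fun k => INR k * INR k) n = INR n * (INR n + 1) * (2 * INR n + 1) / 6.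
Proof. induction n. simpl; lra. rewrite tech5, IHn, S_INR. field. Qed.

Lemma sum_kk n : sum_f_R0 (fun k => INR k * INR (n - k)) n = INR n * (INR n + 1) * (INR n - 1) / 6.
Proof.
  rewrite (sum_eq _ (fun k => INR n * INR k - INR k * INR k)).
  - rewrite minus_sum. rewrite (sum_eq _ (fun i => INR i * INR n)) by (intros; ring).
    rewrite <- (scal_sum (fun i => INR i)).
    rewrite sum_id, sum_sq. field.
  - intros i Hi. rewrite minus_INR by exact Hi. ring.
Qed.

Lemma main_alg a b n : a < b -> (2 <= n)%nat ->
  Rabs ((a^n + b^n)/2 - (b^(n+1) - a^(n+1)) / (INR (n+1) * (b - a)))
  <= INR n * (INR n - 1) * (b - a)^2 / 12 * (Rmax (Rabs a) (Rabs b))^(n-2).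
Proof.
  intros H Hn. set (K := Rmax (Rabs a) (Rabs b)).
  assert (HK : 0 < K).
  { unfold K. destruct (Req_dec a 0).
    - subst. eapply Rlt_le_trans; [|apply Rmax_r]. rewrite Rabs_pos_eq; lra.
    - eapply Rlt_le_trans; [|apply Rmax_l]. apply Rabs_pos_lt. auto. }
  assert (Hn1 : 0 < INR (n+1)) by (apply lt_0_INR; lia).
  set (f := fun k => (a^k - b^k) * (a^(n-k) - b^(n-k))).
  assert (HS : sum_f_R0 f n = INR (n+1) * (a^n + b^n) - 2 * T a b n).
  { rewrite (sum_eq f (fun k => (a^n + b^n - a^k * b^(n-k)) - b^k * a^(n-k))).
    - rewrite minus_sum, minus_sum, sum_cte.
      fold (T a b n). fold (T b a n). rewrite T_sym by lra.
      replace (S n) with (n+1)%nat by lia. ring.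
    - intros i Hi. unfold f.
      replace (a^n) with (a^i * a^(n-i)) by (rewrite <- pow_add; f_equal; lia).
      replace (b^n) with (b^i * b^(n-i)) by (rewrite <- pow_add; f_equal; lia).
      ring. }
  assert (HD : (a^n + b^n)/2 - (b^(n+1) - a^(n+1)) / (INR (n+1) * (b - a))
             = sum_f_R0 f n / (2 * INR (n+1))).
  { rewrite HS. replace (b^(n+1) - a^(n+1)) with ((b-a)*T a b n)
      by (rewrite T_geom; replace (S n) with (n+1)%nat by lia; ring).
    field. split; lra. }
  rewrite HD. unfold Rdiv at 1. rewrite Rabs_mult, (Rabs_pos_eq (/ _)) by (apply Rlt_le, Rinv_0_lt_compat; lra).
  eapply Rle_trans.
  { apply Rmult_le_compat_r; [apply Rlt_le, Rinv_0_lt_compat; lra|].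
    eapply Rle_trans; [apply sum_f_R0_triangle|].
    apply (sum_Rle _ (fun k => (b-a)^2 * K^(n-2) * (INR k * INR (n-k)))).
    intros i Hi. unfold f.
    apply (Rmult_le_reg_r (K*K)); [nra|].
    pose proof (diff_bound a b i H) as H1. pose proof (diff_bound a b (n-i) H) as H2.
    fold K in H1, H2.
    rewrite Rabs_mult.
    replace (Rabs (a ^ i - b ^ i) * Rabs (a ^ (n - i) - b ^ (n - i)) * (K * K))
      with ((Rabs (a ^ i - b ^ i) * K) * (Rabs (a ^ (n - i) - b ^ (n - i)) * K)) by ring.
    replace ((b - a) ^ 2 * K ^ (n - 2) * (INR i * INR (n - i)) * (K * K))
      with (((b - a) * INR i * K^i) * ((b-a) * INR (n-i) * K^(n-i))).
    2:{ assert (E: K^i*K^(n-i) = K^(n-2)*(K*K)) by (rewrite <- pow_add; replace (i + (n-i))%nat with ((n-2)+2)%nat by lia; rewrite pow_add; simpl; ring).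
        transitivity ((b-a)^2*(INR i * INR (n-i))*(K^i*K^(n-i))); [ring| rewrite E; ring]. }
    apply Rmult_le_compat; auto; apply Rmult_le_pos; try apply Rabs_pos; lra. }
  rewrite (sum_eq _ (fun k => (INR k * INR (n-k)) * ((b-a)^2 * K^(n-2)))) by (intros; ring).
  rewrite <- scal_sum, sum_kk, plus_INR. simpl INR at 3 4. right. fold K. rewrite INR_1. field. apply Rgt_not_eq; apply Rlt_gt; assert (0 <= INR n) by apply pos_INR; lra.
Qed.

Lemma exp_le' u v : u <= v -> exp u <= exp v.
Proof. intro H. destruct (Rle_lt_or_eq_dec _ _ H). left; apply exp_increasing; auto. subst; lra. Qed.
Lemma ln_le' u v : 0 < u -> u <= v -> ln u <= ln v.
Proof. intros H0 H. destruct (Rle_lt_or_eq_dec _ _ H). left; apply ln_increasing; auto. subst; lra. Qed.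

Lemma rp1 q : 1 <= q -> 1/3 <= rpow (2/((q+1)*(q+2))) (1/q).
Proof.
  intro Hq. assert (Hx : 0 < 2/((q+1)*(q+2))) by (apply Rdiv_lt_0_compat; nra).
  unfold rpow. destruct (Rlt_dec 0 _) as [_|C]; [|lra].
  unfold Rpower. set (x := 2/((q+1)*(q+2))) in *.
  assert (H3 : 1/3 = exp (- ln 3)) by (rewrite exp_Ropp, exp_ln by lra; lra).
  rewrite H3. apply exp_le'.
  assert (Hc : 1 <= ln 3).
  { rewrite <- (ln_exp 1) at 1. apply ln_le'. apply exp_pos. apply exp_le_3. }
  set (c := ln 3) in *.
  assert (Hk : exp (- (q * c)) <= x).
  { set (s := (q - 1) * c / 2).
    assert (E : exp (q * c) = 3 * (exp s * exp s)).
    { rewrite <- exp_plus. unfold c. rewrite <- (exp_ln 3) at 2 by lra. rewrite <- exp_plus.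
      f_equal. unfold s. fold c. field. }
    pose proof (exp_ineq1_le s) as Hs.
    assert (Hs0 : 0 <= s) by (unfold s; nra).
    assert (Hsc : (q-1)/2 <= s) by (unfold s; nra).
    assert (Hb : (q+1)*(q+2) <= 2 * exp (q*c)).
    { rewrite E. nra. }
    rewrite exp_Ropp. unfold x.
    pose proof (exp_pos (q*c)).
    apply (Rmult_le_reg_r (exp (q*c) * ((q+1)*(q+2)))). nra.
    field_simplify; [|lra|nra]. nra. }
  apply ln_le' in Hk; [|apply exp_pos]. rewrite ln_exp in Hk.
  apply (Rmult_le_reg_l q). lra.
  replace (q * (1/q * ln x)) with (ln x) by (field; lra). nra.
Qed.

Lemma rpow_mono x y e : 0 < e -> 0 <= x <= y -> rpow x e <= rpow y e.
Proof.
  intros He [Hx Hxy]. unfold rpow.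
  destruct (Rlt_dec 0 x); destruct (Rlt_dec 0 y); try lra.
  all: first [apply Rle_Rpower_l; lra | destruct (Req_EM_T e 0); try lra; left; apply exp_pos].
Qed.

Lemma rpow_max x y e : 0 < e -> 0 <= x -> 0 <= y -> Rmax (rpow x e) (rpow y e) = rpow (Rmax x y) e.
Proof.
  intros He Hx Hy. unfold Rmax at 2. destruct (Rle_dec x y).
  - apply Rmax_right. apply rpow_mono; lra.
  - apply Rmax_left. apply rpow_mono; lra.
Qed.

Lemma rp2 (a b : R) (n : nat) (q : R) : 1 <= q -> (2 <= n)%nat -> 0 < Rmax (Rabs a) (Rabs b) ->
  rpow (Rmax (rpow (Rabs a) ((INR n - 2) * q)) (rpow (Rabs b) ((INR n - 2) * q))) (1 / q)
  = (Rmax (Rabs a) (Rabs b)) ^ (n - 2).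
Proof.
  intros Hq Hn HK. set (K := Rmax (Rabs a) (Rabs b)) in *.
  assert (E : INR n - 2 = INR (n - 2)) by (rewrite minus_INR by exact Hn; simpl; ring).
  rewrite E. destruct (n - 2)%nat eqn:En.
  - simpl INR. rewrite Rmult_0_l. unfold rpow.
    assert (R1 : forall z, 0 <= z -> (if Rlt_dec 0 z then Rpower z 0 else if Req_EM_T 0 0 then 1 else 0) = 1).
    { intros z Hz. destruct (Rlt_dec 0 z). apply Rpower_O; auto. destruct (Req_EM_T 0 0); lra. }
    rewrite !R1 by apply Rabs_pos. rewrite Rmax_left by lra.
    destruct (Rlt_dec 0 1); [|lra]. unfold Rpower. rewrite ln_1, Rmult_0_r, exp_0. simpl. reflexivity.
  - assert (Hp : 0 < INR (S n0)) by (apply lt_0_INR; lia).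
    rewrite rpow_max by (try apply Rabs_pos; nra). fold K.
    unfold rpow at 2. destruct (Rlt_dec 0 K); [|lra].
    unfold rpow. destruct (Rlt_dec 0 (Rpower K (INR (S n0) * q))) as [_|C]; [|exfalso; apply C; apply exp_pos].
    rewrite Rpower_mult. replace (INR (S n0) * q * (1/q)) with (INR (S n0)) by (field; lra).
    apply Rpower_pow; auto.
Qed.

Theorem proposition6 (a b : R) (n : nat) (q : R) :
  a < b -> (2 <= n)%nat -> 1 <= q ->
  Rabs (AM (a ^ n) (b ^ n) - Ln_pow n a b) <=
    INR n * (INR n - 1) * (b - a) ^ 2 / 4
    * rpow (2 / ((q + 1) * (q + 2))) (1 / q)
    * rpow (Rmax (rpow (Rabs a) ((INR n - 2) * q))
                 (rpow (Rabs b) ((INR n - 2) * q))) (1 / q).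
Proof.
  intros H Hn Hq.
  assert (HK : 0 < Rmax (Rabs a) (Rabs b)).
  { destruct (Req_dec a 0).
    - subst. eapply Rlt_le_trans; [|apply Rmax_r]. rewrite Rabs_pos_eq; lra.
    - eapply Rlt_le_trans; [|apply Rmax_l]. apply Rabs_pos_lt. auto. }
  rewrite rp2 by assumption.
  pose proof (main_alg a b n H Hn) as M. unfold AM, Ln_pow.
  eapply Rle_trans; [exact M|].
  pose proof (rp1 q Hq) as R1.
  set (r := rpow (2 / ((q + 1) * (q + 2))) (1 / q)) in *.
  set (K := Rmax (Rabs a) (Rabs b)) in *.
  assert (Hn2 : 2 <= INR n) by (replace 2 with (INR 2) by (simpl; lra); apply le_INR; exact Hn).
  assert (HKm : 0 < K ^ (n-2)) by (apply pow_lt; exact HK).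
  assert (HC : 0 <= INR n * (INR n - 1) * (b - a) ^ 2 * K ^ (n-2)).
  { apply Rmult_le_pos; [|lra]. apply Rmult_le_pos; [nra|]. nra. }
  nra.
Qed.
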